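(* Let $n=p^2$ where $p$ is an odd prime, and let $G=\langle p-1\rangle$ be the subgroup of $\mathbb{Z}_n^\times$ generated by $p-1$. Then the coset index function $f_G$ is a $(p^2,p,\{p,p^2-p+1\})$ zero-difference function.
   Context: For a subgroup $G$ of $\mathbb{Z}_n^\times$ and $r\in\mathbb{Z}_n$, the coset $rG=\{rg\mid g\in G\}$; these cosets partition $\mathbb{Z}_n$, forming a set $D_G$. The coset index function induced by $G$ is $f_G:\mathbb{Z}_n\to\mathbb{Z}_{|D_G|}$, $f_G(x)=h_G(C_x)$, where $C_x$ is the coset containing $x$ and $h_G:D_G\to\mathbb{Z}_{|D_G|}$ is a fixed bijection. A function $f:A\to B$ between finite abelian groups is an $(n,m,S)$ zero-difference function if $n=|A|$, $m=|f(A)|$, and for every nonzero $a\in A$, $|\{x\in A\mid f(x+a)=f(x)\}|\in S$. Here $A=(\mathbb{Z}_n,+)$. *)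

(* Defs.v *)
From mathcomp Require Import all_boot all_order all_algebra all_fingroup.
Set Implicit Arguments. Unset Strict Implicit. Unset Printing Implicit Defensive.
Import GRing.Theory.
Local Open Scope ring_scope.

Definition Zn_coset (n : nat) (G : {set {unit 'Z_n}}) (r : 'Z_n) : {set 'Z_n} :=
  [set r * val g | g in G].

Definition Zn_cosets (n : nat) (G : {set {unit 'Z_n}}) : {set {set 'Z_n}} :=
  [set Zn_coset G r | r : 'Z_n].

(* Coset index function f_G(x) = h_G(C_x), where C_x = xG is the coset
   containing x and h : D_G -> Z_{|D_G|} (here 'I_#|D_G|). *)
Definition coset_index_fun (n : nat) (G : {set {unit 'Z_n}})
  (h : {set 'Z_n} -> 'I_#|Zn_cosets G|) (x : 'Z_n) : 'I_#|Zn_cosets G| :=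
  h (Zn_coset G x).

Definition coset_bijection (n : nat) (G : {set {unit 'Z_n}})
  (h : {set 'Z_n} -> 'I_#|Zn_cosets G|) : Prop :=
  {in Zn_cosets G &, injective h} /\
  (forall i : 'I_#|Zn_cosets G|, exists2 C, C \in Zn_cosets G & h C = i).

Definition zero_difference (A : finZmodType) (B : finType) (f : A -> B)
  (n m : nat) (S : pred nat) : Prop :=
  [/\ n = #|A|, m = #|f @: [set: A]| &
      forall a : A, a != 0 -> S #|[set x : A | f (x + a) == f x]|].

(* Main.v *)
Require Import Defs.
From mathcomp Require Import all_boot all_order all_algebra all_fingroup.
From mathcomp Require Import zify ring.
Set Implicit Arguments. Unset Strict Implicit. Unset Printing Implicit Defensive.
Import GRing.Theory.
Local Open Scope ring_scope.

Section S.
Variable p : nat.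
Hypothesis Hp : prime p.
Hypothesis Hodd : odd p.

Local Notation Z := 'Z_(p ^ 2).
Local Notation F := 'F_p.

Lemma p_gt1 : (1 < p)%N. Proof. exact: prime_gt1. Qed.
Lemma pp_gt1 : (1 < p ^ 2)%N.
Proof. have := p_gt1; rewrite expnS expn1 => h; nia. Qed.

Definition phi (x : Z) : F := (x : nat)%:R.

Lemma phi_nat m : phi (m%:R) = m%:R.
Proof.
rewrite /phi val_Zp_nat ?pp_gt1 // -(Fp_nat_mod Hp m) -(Fp_nat_mod Hp (m %% _)).
by rewrite modn_dvdm // dvdn_exp.
Qed.

Lemma ZE (x : Z) : x = (x : nat)%:R. Proof. by rewrite natr_Zp. Qed.

Lemma phiD x y : phi (x + y) = phi x + phi y.
Proof. by rewrite {1}(ZE x) {1}(ZE y) -natrD phi_nat natrD. Qed.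
Lemma phiM x y : phi (x * y) = phi x * phi y.
Proof. by rewrite {1}(ZE x) {1}(ZE y) -natrM phi_nat natrM. Qed.
Lemma phi1 : phi 1 = 1. Proof. exact: (phi_nat 1). Qed.
Lemma phi0 : phi 0 = 0. Proof. exact: (phi_nat 0). Qed.
Lemma phiN x : phi (- x) = - phi x.
Proof. by apply/eqP; rewrite -subr_eq0 opprK -phiD addNr phi0. Qed.
Lemma phiX x k : phi (x ^+ k) = phi x ^+ k.
Proof. by elim: k => [|k IH]; rewrite ?expr0 ?phi1 // !exprS phiM IH. Qed.

Lemma phi_eq0 x : (phi x == 0) = (p %| x)%N.
Proof.
rewrite /dvdn -(val_Fp_nat Hp) /phi; apply/eqP/eqP => [-> //|H].
by apply/val_inj; rewrite /= H.
Qed.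

Lemma unit_phi x : (x \is a GRing.unit) = (phi x != 0).
Proof.
by rewrite {1}(ZE x) unitZpE ?pp_gt1 // coprime_pexpl // prime_coprime // phi_eq0.
Qed.

Definition q : Z := p%:R.
Lemma qq : q * q = 0.
Proof. by rewrite /q -natrM mulnn pchar_Zp ?pp_gt1. Qed.
Lemma phi_q : phi q = 0.
Proof. by rewrite /q phi_nat pchar_Fp_0. Qed.
Lemma phi_ker x : phi x = 0 -> exists c, x = q * c.
Proof.
move/eqP; rewrite phi_eq0 => /divnK H; exists (x %/ p)%N%:R.
by rewrite /q -natrM mulnC H -ZE.
Qed.

Definition W (w : Z) := phi w ^+ 2 == 1.

Lemma powq k : (q - 1) ^+ k = (-1) ^+ k * (1 - q * k%:R).
Proof.
elim: k => [|k IH]; first by rewrite !expr0 mulr0 subr0 mulr1.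
rewrite exprSr IH exprSr.
have H : (1 - q * k%:R) * (q - 1) = - (1 - q * k.+1%:R) - (q * q) * k%:R.
  by rewrite -natr1; ring.
by rewrite -[LHS]mulrA H qq mul0r subr0 mulrN mulrN1 mulNr.
Qed.

Lemma W_sign w : W w -> exists b : bool, phi w = (-1) ^+ b.
Proof.
rewrite /W sqrf_eq1 => /orP [] /eqP ->; by [exists false | exists true].
Qed.

Lemma W_unit w : W w -> w \is a GRing.unit.
Proof.
move=> /W_sign [[|] Hb]; rewrite unit_phi Hb.
  by rewrite expr1 oppr_eq0 oner_eq0.
by rewrite expr0 oner_eq0.
Qed.

Lemma key (vg sZ c : Z) (j e : nat) : vg - sZ = q * c -> sZ * sZ = 1 ->
  (j%:R : Z) = - (sZ * c) -> vg = sZ * (1 - q * (j + p * e)%:R).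
Proof.
move=> Hc ss Hj.
have pq : (p%:R : Z) = q by [].
rewrite natrD natrM pq (mulrDr q) (mulrA q q) qq mul0r addr0 Hj.
have -> : sZ * (1 - q * - (sZ * c)) = sZ + (sZ * sZ) * (q * c) by ring.
by rewrite ss mul1r -Hc addrC subrK.
Qed.

Lemma memG (u : {unit Z}) (Hu : val u = (p - 1)%:R) (g : {unit Z}) :
  (g \in <[u]>%g) = W (val g).
Proof.
have Hq : val u = q - 1 by rewrite Hu natrB ?(ltnW p_gt1).
have phiu : phi (val u) = -1 by rewrite Hq phiD phiN phi1 phi_q add0r.
apply/cycleP/idP => [[k ->]|].
  by rewrite FinRing.val_unitX /W phiX phiu sqrr_sign.
move=> /[dup] HW /W_sign [b Hb].
set sZ : Z := (-1) ^+ b.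
have Hs : phi (val g - sZ) = 0.
  by rewrite phiD phiN Hb /sZ phiX phiN phi1 subrr.
have [c Hc] := phi_ker Hs.
set j := (- (sZ * c) : Z) : nat.
exists (j + p * (odd j (+) b))%N.
apply/val_inj; rewrite FinRing.val_unitX Hq powq.
have -> : (-1) ^+ (j + p * (odd j (+) b))%N = sZ :> Z.
  rewrite -signr_odd oddD oddM Hodd /= /sZ.
  by rewrite oddb addbA addbb.
apply: key Hc _ _; first by rewrite /sZ -exprD -signr_odd oddD addbb.
by rewrite /j -ZE.
Qed.

Lemma W1 : W 1. Proof. by rewrite /W phi1 expr1n. Qed.
Lemma WM a b : W a -> W b -> W (a * b).
Proof. by rewrite /W phiM exprMn => /eqP -> /eqP ->; rewrite mulr1. Qed.
Lemma WV a : W a -> W a^-1.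
Proof.
move=> Ha; have Hu := W_unit Ha.
have H : phi a^-1 * phi a = 1 by rewrite -phiM mulVr // phi1.
move: Ha; rewrite /W => /eqP Ha.
by apply/eqP; rewrite -[LHS]mulr1 -Ha -exprMn H expr1n.
Qed.
Lemma WN1 : W (-1). Proof. by rewrite /W phiN phi1 sqrrN expr1n. Qed.

Section U.
Variable u : {unit Z}.
Hypothesis Hu : val u = (p - 1)%:R.
Local Notation G := (<[u]>%g).

Lemma memC x y :
  (y \in Zn_coset G x) = [exists w, W w && (y == x * w)].
Proof.
apply/imsetP/existsP => [[g Hg ->]|[w /andP [Hw /eqP ->]]].
  by exists (val g); rewrite -(memG Hu) Hg eqxx.
exists (Sub w (W_unit Hw) : {unit Z}); last by rewrite SubK.
by rewrite (memG Hu) SubK.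
Qed.

Lemma cosetE x y : (Zn_coset G x == Zn_coset G y) = (y \in Zn_coset G x).
Proof.
apply/eqP/idP => [->|].
  by rewrite memC; apply/existsP; exists 1; rewrite W1 mulr1 eqxx.
rewrite memC => /existsP [w /andP [Hw /eqP Hy]].
apply/setP => z; rewrite !memC.
apply/existsP/existsP => [[w' /andP [Hw' /eqP ->]]|[w' /andP [Hw' /eqP ->]]].
  exists (w^-1 * w'); rewrite WM ?WV //= Hy -mulrA (mulrA w) mulrV ?W_unit //.
  by rewrite mul1r.
by exists (w * w'); rewrite WM //= Hy mulrA.
Qed.

Lemma fEq (h : {set Z} -> 'I_#|Zn_cosets G|) (Hh : coset_bijection h) x y :
  (coset_index_fun h x == coset_index_fun h y) = (Zn_coset G x == Zn_coset G y).
Proof.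
rewrite /coset_index_fun; apply/eqP/eqP => [|-> //] => /(proj1 Hh); apply.
  by apply/imsetP; exists x.
by apply/imsetP; exists y.
Qed.

End U.

Lemma pp : (p ^ 2 = p * p)%N. Proof. by rewrite mulnn. Qed.
Lemma card_Z : #|Z| = (p ^ 2)%N. Proof. by rewrite card_ord Zp_cast ?pp_gt1. Qed.
Lemma ltZ (z : Z) : (z < p ^ 2)%N.
Proof. by apply: leq_trans (ltn_ord z) _; rewrite Zp_cast ?pp_gt1. Qed.

Lemma natZ_inj a b : (a < p ^ 2)%N -> (b < p ^ 2)%N -> (a%:R : Z) = b%:R -> a = b.
Proof.
move=> Ha Hb /(congr1 (fun z : Z => z : nat)).
by rewrite !val_Zp_nat ?pp_gt1 // !modn_small.
Qed.

Lemma natZ_opp a b : (a%:R : Z) = - b%:R -> (p ^ 2 %| a + b)%N.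
Proof.
move=> /eqP; rewrite -addr_eq0 -natrD => /eqP /(congr1 (fun z : Z => z : nat)).
by rewrite val_Zp_nat ?pp_gt1 // /dvdn => ->.
Qed.

Lemma card_ker : #|[set z : Z | phi z == 0]| = p.
Proof.
have -> : [set z : Z | phi z == 0] = [set (((i : nat) * p)%N)%:R | i : 'I_p].
  apply/setP => z; rewrite inE; apply/idP/imsetP.
    rewrite phi_eq0 => Hd.
    have Hi : (z %/ p < p)%N by rewrite ltn_divLR ?prime_gt0 // -pp ltZ.
    by exists (Ordinal Hi) => //=; rewrite divnK // -ZE.
  by move=> [i _ ->]; rewrite phi_nat natrM pchar_Fp_0 // mulr0.
rewrite card_imset ?card_ord // => i j /natZ_inj.
have := ltn_ord i; have := ltn_ord j; rewrite pp => Hj Hi.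
move=> H; apply: val_inj; apply/eqP; rewrite -(eqn_pmul2r (prime_gt0 Hp)).
by rewrite H //; nia.
Qed.

Lemma two_unit : (2%:R : Z) \is a GRing.unit.
Proof. by rewrite unitZpE ?pp_gt1 // coprime_pexpl // coprime_sym coprime2n. Qed.

Lemma nil_mul x w s : phi x = 0 -> phi w = phi s -> x * w = x * s.
Proof.
move=> Hx Hw.
have [c Hc] := phi_ker Hx.
have [d Hd] : exists d, w - s = q * d by apply: phi_ker; rewrite phiD phiN Hw subrr.
apply/eqP; rewrite -subr_eq0 -mulrBr Hd Hc.
have -> : q * c * (q * d) = (q * q) * (c * d) by ring.
by rewrite qq mul0r.
Qed.

Lemma exW x y : phi x != 0 -> (phi y = phi x \/ phi y = - phi x) ->
  [exists w, W w && (y == x * w)].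
Proof.
move=> Hx Hy; have Ux : x \is a GRing.unit by rewrite unit_phi.
apply/existsP; exists (x^-1 * y); rewrite mulrA mulrV // mul1r eqxx andbT.
have H : phi x^-1 * phi x = 1 by rewrite -phiM mulVr // phi1.
rewrite /W phiM; case: Hy => ->; rewrite ?mulrN ?sqrrN H expr1n //.
Qed.


Definition Sa (a : Z) := [set x : Z | [exists w, W w && (x + a == x * w)]].

Lemma Sa_unit a : phi a != 0 -> #|Sa a| = p.
Proof.
move=> Ha.
have -> : Sa a = (fun x => x + x + a) @^-1: [set z | phi z == 0].
  apply/setP => x; rewrite !inE; apply/existsP/idP.
    move=> [w /andP [Hw /eqP E]].
    have /(congr1 phi) := E; rewrite phiD phiM.
    have [[|] ->] := W_sign Hw => E'.
      by rewrite !phiD -addrA E' expr1 mulrN1 addrN.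
    move: E'; rewrite expr0 mulr1 -{2}[phi x]addr0 => /addrI Ha0.
    by rewrite Ha0 eqxx in Ha.
  rewrite !phiD -addrA addrC addr_eq0 => /eqP H0.
  have Hx : phi x != 0.
    apply: contra Ha => /eqP Hx; move: H0; rewrite Hx oppr0 add0r => ->.
    by [].
  have Ux : x \is a GRing.unit by rewrite unit_phi.
  have H : phi x^-1 * phi x = 1 by rewrite -phiM mulVr // phi1.
  exists (x^-1 * (x + a)); rewrite mulrA mulrV // mul1r eqxx andbT.
  by rewrite /W phiM phiD H0 mulrN sqrrN H expr1n.
rewrite card_preimset ?card_ker // => x y /addIr.
have H2 : forall z : Z, z + z = z * 2%:R by move=> z; rewrite mulr_natr mulr2n.
rewrite !H2; exact: (mulIr two_unit).
Qed.

Lemma Sa_nonunit a : a != 0 -> phi a = 0 -> #|Sa a| = (p ^ 2 - p + 1)%N.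
Proof.
move=> Ha Hpa.
set x0 := - (a / 2%:R).
have ha : a / 2%:R + a / 2%:R = a.
  have H2 : a / 2%:R * 2%:R = a by rewrite divrK ?two_unit.
  by rewrite -{3}H2 mulr_natr mulr2n.
have -> : Sa a = x0 |: ~: [set z | phi z == 0].
  apply/setP => x; rewrite !inE; apply/existsP/idP.
    move=> [w /andP [Hw /eqP E]].
    case: (eqVneq (phi x) 0) => Hx; last by rewrite orbT.
    have [b Hb] := W_sign Hw.
    have Hs : phi w = phi ((-1) ^+ b) by rewrite Hb phiX phiN phi1.
    move: E; rewrite (nil_mul Hx Hs); case: b {Hb Hs} => E.
      rewrite expr1 mulrN1 in E; apply/orP; left; apply/eqP.
      have Ea : a = - x - x by rewrite -[a](addKr x) E.
      have : x * 2%:R = - a by rewrite mulr_natr mulr2n Ea opprD !opprK.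
      move=> /(congr1 (fun y => y / 2%:R)); rewrite mulrK ?two_unit // => ->.
      by rewrite /x0 mulNr.
    move: E; rewrite expr0 mulr1 -{2}[x]addr0 => /addrI Ha0.
    by rewrite Ha0 eqxx in Ha.
  case/orP => [/eqP -> | Hx].
    exists (-1); rewrite WN1 /= mulrN1 /x0 opprK; apply/eqP.
    by rewrite -{2}ha addrA addNr add0r.
  have Ux : x \is a GRing.unit by rewrite unit_phi.
  have H : phi x^-1 * phi x = 1 by rewrite -phiM mulVr // phi1.
  exists (x^-1 * (x + a)); rewrite mulrA mulrV // mul1r eqxx andbT.
  by rewrite /W phiM phiD Hpa addr0 H expr1n.
rewrite cardsU1 !inE /x0 phiN phiM Hpa mul0r oppr0 eqxx /=.
have := cardsC [set z : Z | phi z == 0]; rewrite card_ker card_Z.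
set k := #|~: _|; lia.
Qed.


Definition hh := p./2.
Lemma p_hh : p = (hh + hh + 1)%N.
Proof. by have := odd_double_half p; rewrite Hodd /hh -addnn; lia. Qed.

Definition sig (i : 'I_p) : Z :=
  if (0 < i <= hh)%N then (i : nat)%:R else (((i - hh) * p)%N)%:R.

Lemma ltF (z : F) : (z < p)%N.
Proof. by apply: leq_trans (ltn_ord z) _; rewrite Fp_cast. Qed.

Lemma FE (z : F) : z = (z : nat)%:R. Proof. by rewrite natr_Zp. Qed.

Lemma natF_inj a b : (a < p)%N -> (b < p)%N -> (a%:R : F) = b%:R -> a = b.
Proof.
move=> Ha Hb /(congr1 (fun z : F => z : nat)).
by rewrite !val_Fp_nat // !modn_small.
Qed.

Lemma natF_eq0 a : (0 < a < p)%N -> (a%:R : F) != 0.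
Proof.
move=> /andP [H0 Ha]; apply/eqP => /(congr1 (fun z : F => z : nat)).
by rewrite val_Fp_nat // modn_small //= => H; rewrite H in H0.
Qed.

Lemma phi_sig i : phi (sig i) = if (0 < i <= hh)%N then (i : nat)%:R else 0.
Proof.
rewrite /sig; case: ifP => _; rewrite phi_nat //.
by rewrite natrM pchar_Fp_0 // mulr0.
Qed.

Lemma sig_surj x : exists i, [exists w, W w && (sig i == x * w)].
Proof.
have Hpp := p_hh.
case: (eqVneq (phi x) 0) => Hx.
  have Hd : (p %| x)%N by rewrite -phi_eq0 Hx.
  set v := (x %/ p)%N.
  have Hv : (v < p)%N by rewrite ltn_divLR ?prime_gt0 // -pp ltZ.
  have Exv : x = ((v * p)%N)%:R by rewrite divnK // -ZE.
  case: (posnP v) => Hv0.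
    exists (Ordinal (prime_gt0 Hp)); apply/existsP; exists 1.
    by rewrite W1 mulr1 /sig /= Exv Hv0.
  case: (leqP v hh) => Hvh.
    have Hi : (v + hh < p)%N by lia.
    exists (Ordinal Hi); apply/existsP; exists 1; rewrite W1 mulr1 /sig /=.
    case: ifP => [/andP [] |_]; first by move=> *; lia.
    by rewrite addnK Exv.
  have Hi : (p - v + hh < p)%N by lia.
  exists (Ordinal Hi); apply/existsP; exists (-1); rewrite WN1 mulrN1 /sig /=.
  case: ifP => [/andP [] |_]; first by lia.
  rewrite addnK Exv mulnBl natrB ?leq_mul2r ?(ltnW Hv) ?orbT //.
  by rewrite natrM qq sub0r.
set v := (phi x : nat).
have Hv : (v < p)%N by apply: ltF.
have Ev : phi x = v%:R by rewrite -FE.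
have Hv0 : (0 < v)%N.
  by rewrite lt0n; apply: contra Hx => /eqP Hv0; rewrite Ev Hv0.
case: (leqP v hh) => Hvh.
  exists (Ordinal Hv); apply: exW => //; left; rewrite /sig /=.
  by rewrite Hv0 Hvh /= phi_nat Ev.
have Hi : (p - v < p)%N by lia.
exists (Ordinal Hi); apply: exW => //; right; rewrite /sig /=.
have -> : (0 < p - v <= hh)%N = true by apply/andP; lia.
by rewrite phi_nat natrB ?(ltnW Hv) // pchar_Fp_0 // sub0r Ev.
Qed.

Lemma sig_inj i j w : W w -> sig j = sig i * w -> i = j.
Proof.
move=> Hw E; have Hpp := p_hh.
have Hi := ltn_ord i; have Hj := ltn_ord j.
have [b Hb] := W_sign Hw.
have /(congr1 phi) := E; rewrite phiM !phi_sig Hb.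
have Hs1 : (-1) ^+ b != 0 :> F by case: b {Hb}; rewrite ?expr1 ?oppr_eq0 oner_eq0.
case: ifP => Aj; case: ifP => Ai.
- case: b {Hb Hs1} => /=; rewrite ?expr1 ?mulrN1 ?expr0 ?mulr1.
    move/eqP; rewrite -addr_eq0 -natrD => /eqP H.
    have : ((j + i)%:R : F) != 0 by apply: natF_eq0; lia.
    by rewrite H eqxx.
  by move=> H; apply: val_inj; symmetry; exact: natF_inj Hj Hi H.
- have Hn : (j%:R : F) != 0 by apply: natF_eq0; lia.
  by rewrite mul0r => /eqP; rewrite (negPf Hn).
- have Hn : (i%:R : F) != 0 by apply: natF_eq0; lia.
  by move=> /esym /eqP; rewrite mulf_eq0 (negPf Hs1) orbF (negPf Hn).
- move=> _.
  have Hs : phi w = phi ((-1) ^+ b) by rewrite Hb phiX phiN phi1.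
  have Hx : phi (sig i) = 0 by rewrite phi_sig Ai.
  move: E; rewrite (nil_mul Hx Hs) /sig Ai Aj.
  have Hbi : ((i - hh) * p < p ^ 2)%N by rewrite pp; nia.
  have Hbj : ((j - hh) * p < p ^ 2)%N by rewrite pp; nia.
  case: b {Hb Hs1 Hs} => /=; rewrite ?expr1 ?mulrN1 ?expr0 ?mulr1.
    move/natZ_opp; rewrite -mulnDl pp dvdn_pmul2r ?prime_gt0 // => Hd.
    have : (j - hh + (i - hh) = 0)%N.
      apply/eqP; apply: contraLR Hd; rewrite -lt0n => H0.
      by apply/negP => Hd2; have := dvdn_leq H0 Hd2; lia.
    move=> H; apply: val_inj => /=; lia.
  move/natZ_inj => H; have := H Hbj Hbi => /eqP; rewrite eqn_pmul2r ?prime_gt0 // => /eqP H'.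
  apply: val_inj => /=; lia.
Qed.

End S.

Theorem theorem3p5 (p : nat) (Hp : prime p) (Hodd : odd p)
  (u : {unit 'Z_(p ^ 2)}) (Hu : val u = (p - 1)%:R)
  (h : {set 'Z_(p ^ 2)} -> 'I_#|Zn_cosets <[u]>%g|)
  (Hh : coset_bijection h) :
  zero_difference (coset_index_fun h) (p ^ 2) p
    [pred k | (k == p) || (k == p ^ 2 - p + 1)%N].
Proof.
split.
- by rewrite card_Z.
- have Hcos : #|Zn_cosets <[u]>%g| = p.
    have E : Zn_cosets <[u]>%g = [set Zn_coset <[u]>%g (sig i) | i : 'I_p].
      apply/setP => C; apply/imsetP/imsetP => [[x _ ->]|[i _ ->]]; last by exists (sig i).
      have [i Hi] := sig_surj Hp Hodd x; exists i => //.
      by apply/eqP; rewrite (cosetE Hp Hodd Hu) (memC Hp Hodd Hu).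
    rewrite E card_imset ?card_ord // => i j /eqP.
    rewrite (cosetE Hp Hodd Hu) (memC Hp Hodd Hu) => /existsP [w /andP [Hw /eqP Ew]].
    exact: sig_inj Hw Ew.
  have -> : coset_index_fun h @: setT = setT.
    apply/setP => i; rewrite inE; have [C HC <-] := (proj2 Hh) i.
    by case/imsetP: HC => r _ ->; apply/imsetP; exists r.
  by rewrite cardsT card_ord Hcos.
- move=> a Ha.
  have -> : [set x | coset_index_fun h (x + a) == coset_index_fun h x] = Sa a.
    apply/setP => x; rewrite !inE (fEq Hh) eq_sym (cosetE Hp Hodd Hu) (memC Hp Hodd Hu).
    by [].
  case: (eqVneq (phi a) 0) => H.
    by rewrite (Sa_nonunit Hp Hodd Ha H) /= eqxx orbT.
  by rewrite (Sa_unit Hp Hodd H) /= eqxx.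
Qed.
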